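(* In the setting below, let $x\in\{0,1\}^n$ satisfy $w_{\mathcal{I}}(x)\in[W-w_{\max},W]$. With probability at least $1-1/n^2$ (over the random partition), for all $\ell\in\{0,\dots,\log_2 q\}$ and all $j\in\{1,\dots,q/2^\ell\}$: (i) $w_{\mathcal{I}^\ell_j}(x)\in J^\ell$, and (ii) $C^\ell_j[w_{\mathcal{I}^\ell_j}(x)]\ge p_{\mathcal{I}^\ell_j}(x)$.
   Context: Setting: a 0-1 Knapsack instance with items $\mathcal{I}=\{1,\dots,n\}$, $n\ge 3$, profits $p_i\in\mathbb{N}$, weights $w_i\in\mathbb{N}$, $w_{\max}=\max_i w_i$, budget $W$ with $w_{\max}\le W\le n\,w_{\max}$. For $\mathcal{J}\subseteq\mathcal{I}$ and $x\in\{0,1\}^n$, $w_{\mathcal{J}}(x)=\sum_{i\in\mathcal{J}}w_ix_i$, $p_{\mathcal{J}}(x)=\sum_{i\in\mathcal{J}}p_ix_i$, and the profit sequence is $\mathcal{P}_{\mathcal{J}}[t]=\max\{p_{\mathcal{J}}(x): x\in\{0,1\}^n,\ w_{\mathcal{J}}(x)\le t\}$ for $t\in\mathbb{N}$ (only items of $\mathcal{J}$ count). For reals $a\le b$, $[a..b]:=\{\max(0,\lfloor a\rfloor),\dots,\lceil b\rceil\}$. Let $q$ be a power of $2$ with $1\le q\le W/w_{\max}$, $\Delta:=w_{\max}W/q$, $\eta:=11\ln n$, and for $\ell\in\{0,\dots,\log_2q\}$ let $J^\ell:=[\tfrac{W}{q}2^\ell-\sqrt{\Delta2^\ell}\eta\,..\,\tfrac{W}{q}2^\ell+\sqrt{\Delta2^\ell}\eta]$.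 Assign each item independently uniformly at random to one of groups $\mathcal{I}^0_1,\dots,\mathcal{I}^0_q$, and set $\mathcal{I}^\ell_j=\mathcal{I}^{\ell-1}_{2j-1}\cup\mathcal{I}^{\ell-1}_{2j}$ for $\ell\ge1$, $1\le j\le q/2^\ell$. Define arrays $C^\ell_j$ indexed by $J^\ell$: $C^0_j[t]=\mathcal{P}_{\mathcal{I}^0_j}[t]$ for $t\in J^0$, and for $\ell\ge1$, $k\in J^\ell$: $C^\ell_j[k]=\max\{C^{\ell-1}_{2j-1}[i]+C^{\ell-1}_{2j}[i'] : i,i'\in J^{\ell-1},\ i+i'=k\}$ (maximum of the empty set is $-\infty$). *)

(* Defs.v *)
From mathcomp Require Import all_boot.
From Stdlib Require Import Reals ZArith.

Set Implicit Arguments.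
Unset Strict Implicit.
Unset Printing Implicit Defensive.

Definition wmax (n : nat) (w : 'I_n -> nat) : nat := \max_(i < n) w i.

Definition wJ (n : nat) (w : 'I_n -> nat) (J : pred 'I_n) (x : {ffun 'I_n -> bool}) : nat :=
  \sum_(i < n | J i) w i * x i.
Definition pJ (n : nat) (p : 'I_n -> nat) (J : pred 'I_n) (x : {ffun 'I_n -> bool}) : nat :=
  \sum_(i < n | J i) p i * x i.

Definition profitSeq (n : nat) (w p : 'I_n -> nat) (J : pred 'I_n) (t : nat) : nat :=
  \max_(y : {ffun 'I_n -> bool} | wJ w J y <= t) pJ p J y.

(* Stdlib: up r is the unique integer with r < up r <= r + 1, so up r - 1 = floor r. *)
Definition floorR (r : R) : Z := (up r - 1)%Z.
Definition ceilR (r : R) : Z := (- floorR (- r))%Z.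

(* t \in [a..b] = {max(0,floor a), ..., ceil b}; for t : nat the max with 0 is automatic *)
Definition inIntv (a b : R) (t : nat) : bool :=
  (Z.leb (floorR a) (Z.of_nat t) && Z.leb (Z.of_nat t) (ceilR b))%Z.

(* q = 2^k, Delta = wmax * W / q, eta = 11 ln n,
   J^l = [ W/q 2^l - sqrt(Delta 2^l) eta .. W/q 2^l + sqrt(Delta 2^l) eta ] *)
Definition Delta (n : nat) (w : 'I_n -> nat) (W k : nat) : R :=
  (INR (wmax w) * INR W / INR (2 ^ k))%R.
Definition eta (n : nat) : R := (11 * ln (INR n))%R.

Definition inJ (n : nat) (w : 'I_n -> nat) (W k l t : nat) : bool :=
  let c := (INR W / INR (2 ^ k) * INR (2 ^ l))%R in
  let r := (sqrt (Delta w W k * INR (2 ^ l)) * eta n)%R in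
  inIntv (c - r)%R (c + r)%R t.

(* a : {ffun 'I_n -> 'I_(2^k)} assigns item i to group I^0_{(a i)+1} (groups are 1-based).
   I^l_j = I^{l-1}_{2j-1} \cup I^{l-1}_{2j}. *)
Fixpoint inGroup (n k : nat) (a : {ffun 'I_n -> 'I_(2 ^ k)}) (l j : nat) (i : 'I_n) : bool :=
  match l with
  | 0 => (a i).+1 == j
  | l'.+1 => inGroup a l' (2 * j - 1) i || inGroup a l' (2 * j) i
  end.

(* ---------- the arrays C^l_j, values in N \cup {-oo} (None = -oo) ---------- *)

Definition omax (u v : option nat) : option nat :=
  match u, v with
  | None, _ => v
  | _, None => u
  | Some a, Some b => Some (maxn a b)
  end.

Definition oadd (u v : option nat) : option nat :=
  match u, v with
  | Some a, Some b => Some (a + b)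
  | _, _ => None
  end.

(* C l j t, meaningful for t \in J^l (None outside J^l, where the array is undefined). *)
Fixpoint Carr (n : nat) (w p : 'I_n -> nat) (W k : nat) (a : {ffun 'I_n -> 'I_(2 ^ k)})
    (l j t : nat) : option nat :=
  match l with
  | 0 => if inJ w W k 0 t then Some (profitSeq w p (inGroup a 0 j) t) else None
  | l'.+1 =>
      if inJ w W k l t then
        foldr omax None
          [seq oadd (Carr w p W a l' (2 * j - 1) i) (Carr w p W a l' (2 * j) (t - i))
          | i <- iota 0 t.+1 & inJ w W k l' i && inJ w W k l' (t - i)]
      else None
  end.

Definition oge (v : option nat) (m : nat) : bool :=
  if v is Some c then m <= c else false.

Definition goodPartition (n : nat) (w p : 'I_n -> nat) (W k : nat) (x : {ffun 'I_n -> bool})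
    (a : {ffun 'I_n -> 'I_(2 ^ k)}) : bool :=
  [forall l : 'I_k.+1, [forall j : 'I_(2 ^ (k - l)),
     let G := inGroup a l j.+1 in
     inJ w W k l (wJ w G x) && oge (Carr w p W a l j.+1 (wJ w G x)) (pJ p G x)]].

(* Main.v *)
Require Import Defs.
From mathcomp Require Import all_boot.
From Stdlib Require Import Reals Lra ZArith Lia.
From mathcomp Require Import zify.
Set Implicit Arguments. Unset Strict Implicit. Unset Printing Implicit Defensive.

Lemma powE m e : Nat.pow m e = expn m e.
Proof. elim: e => [|e IH] //=; by rewrite expnS IH. Qed.

Section PartAB.
Variables (n : nat) (w p : 'I_n -> nat) (W k : nat) (x : {ffun 'I_n -> bool}).
Variable a : {ffun 'I_n -> 'I_(2 ^ k)}.

Lemma inGroupE l j i : inGroup a l j.+1 i = ((a i) %/ expn 2 l == j).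
Proof.
elim: l j => [|l IH] j /=; first by rewrite expn0 divn1.
have -> : 2 * j.+1 - 1 = (2 * j).+1 by lia.
have -> : 2 * j.+1 = (2 * j + 1).+1 by lia.
rewrite !IH expnSr divnMA.
set m := _ %/ _. lia.
Qed.

Lemma sum_or (P1 P2 : pred 'I_n) (F : 'I_n -> nat) :
  (forall i, ~~ (P1 i && P2 i)) ->
  \sum_(i < n | P1 i || P2 i) F i = \sum_(i < n | P1 i) F i + \sum_(i < n | P2 i) F i.
Proof.
move=> H; rewrite big_mkcond [X in _ = X + _]big_mkcond [X in _ = _ + X]big_mkcond -big_split /=.
apply: eq_bigr => i _; move: (H i); case: (P1 i); case: (P2 i) => //= _; by rewrite ?addn0.
Qed.

Lemma oge_foldr (s : seq (option nat)) m :
  has (fun e => oge e m) s -> oge (foldr omax None s) m.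
Proof.
elim: s => //= e s IH /orP [He|Hs].
  move: He; case: e => // c Hc; case E: (foldr omax None s) => [d|] //=.
  exact: leq_trans Hc (leq_maxl _ _).
move: (IH Hs); case E: (foldr omax None s) => [d|] // Hd; case: e => [c|] //=.
exact: leq_trans Hd (leq_maxr _ _).
Qed.

Lemma oge_oadd u v m1 m2 : oge u m1 -> oge v m2 -> oge (oadd u v) (m1 + m2).
Proof. case: u => // c; case: v => //= d; exact: leq_add. Qed.

Lemma CarrS l j t : Carr w p W a l.+1 j t =
  if inJ w W k l.+1 t then
        foldr omax None
          [seq oadd (Carr w p W a l (2 * j - 1) i) (Carr w p W a l (2 * j) (t - i))
          | i <- iota 0 t.+1 & inJ w W k l i && inJ w W k l (t - i)]
      else None.
Proof. by []. Qed.

Hypothesis allJ : forall l j, l <= k -> j < 2 ^ (k - l) ->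
  inJ w W k l (wJ w (inGroup a l j.+1) x).

Lemma allC l j : l <= k -> j < 2 ^ (k - l) ->
  oge (Carr w p W a l j.+1 (wJ w (inGroup a l j.+1) x)) (pJ p (inGroup a l j.+1) x).
Proof.
elim: l j => [|l IH] j Hl Hj.
  rewrite /= (allJ Hl Hj) /=. rewrite /profitSeq.
  by apply: (@leq_bigmax_cond _ (fun y => wJ w (inGroup a 0 j.+1) y <= wJ w (inGroup a 0 j.+1) x) (fun y => pJ p (inGroup a 0 j.+1) y) x).
have Hl' : l <= k by lia.
have Hk : 2 ^ (k - l) = 2 * 2 ^ (k - l.+1) by rewrite !powE -expnS; congr (expn 2 _); lia.
have Hj1 : 2 * j < 2 ^ (k - l) by lia.
have Hj2 : 2 * j + 1 < 2 ^ (k - l) by lia.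
have E1 : 2 * j.+1 - 1 = (2 * j).+1 by lia.
have E2 : 2 * j.+1 = (2 * j + 1).+1 by lia.
have disj : forall i, ~~ (inGroup a l (2 * j).+1 i && inGroup a l (2 * j + 1).+1 i).
  move=> i; rewrite !inGroupE; set m := _ %/ _; lia.
have Hw : wJ w (inGroup a l.+1 j.+1) x =
   wJ w (inGroup a l (2 * j).+1) x + wJ w (inGroup a l (2 * j + 1).+1) x.
  rewrite /wJ -sum_or //; apply: eq_bigl => i /=; by rewrite E1 E2.
have Hp : pJ p (inGroup a l.+1 j.+1) x =
   pJ p (inGroup a l (2 * j).+1) x + pJ p (inGroup a l (2 * j + 1).+1) x.
  rewrite /pJ -sum_or //; apply: eq_bigl => i /=; by rewrite E1 E2.
have HJ := allJ Hl Hj.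
rewrite Hp; move: HJ; rewrite Hw => HJ.
rewrite CarrS HJ E1 E2.
apply: oge_foldr; apply/hasP.
set i1 := wJ w (inGroup a l (2 * j).+1) x.
set i2 := wJ w (inGroup a l (2 * j + 1).+1) x.
exists (oadd (Carr w p W a l (2 * j).+1 i1) (Carr w p W a l (2 * j + 1).+1 (i1 + i2 - i1))).
  apply/mapP; exists i1; last by [].
  rewrite mem_filter mem_iota addKn (allJ Hl' Hj1) (allJ Hl' Hj2) /=. lia.
rewrite addKn; apply: oge_oadd; [exact: IH | exact: IH].
Qed.
End PartAB.


Lemma card_slice (q P j : nat) : 0 < P -> j * P + P <= q ->
  #|[pred t : 'I_q | t %/ P == j]| = P.
Proof.
move=> hP hq.
have Hf : forall u : 'I_P, j * P + u < q by move=> u; have := ltn_ord u; lia.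
pose f := fun u : 'I_P => Ordinal (Hf u).
have finj : injective f.
  move=> u1 u2 /(congr1 val) /= h; apply: val_inj => /=; lia.
rewrite -[RHS](card_ord P) -(card_imset (mem 'I_P) finj).
apply: eq_card => t /=; rewrite inE.
apply/idP/imsetP.
  move=> /eqP ht.
  have hmod : t %% P < P by rewrite ltn_mod.
  exists (Ordinal hmod) => //; apply: val_inj => /=.
  by rewrite {1}(divn_eq t P) ht addnC.
move=> [u _ ->] /=.
by rewrite divnMDl // divn_small ?addn0.
Qed.

Lemma sum_pow2 (k : nat) : \sum_(l < k.+1) expn 2 (k - l) < expn 2 k.+1.
Proof.
elim: k => [|k IH]; first by rewrite big_ord1.
rewrite big_ord_recl /= subn0.
have -> : \sum_(i < k.+1) expn 2 (k.+1 - bump 0 i) = \sum_(i < k.+1) expn 2 (k - i).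
  by apply: eq_bigr => i _; rewrite /bump /= add1n subSS.
rewrite [expn 2 k.+2]expnS; lia.
Qed.


Section StdlibPart.
Local Open Scope R_scope.
Lemma notinIntv (a b : R) (t : nat) : ~~ inIntv a b t -> INR t < a \/ b < INR t.
Proof.
rewrite /inIntv /floorR /ceilR.
have [ha1 ha2] := archimed a. have [hb1 hb2] := archimed (- b).
rewrite INR_IZR_INZ.
case E1: (Z.leb (up a - 1) (Z.of_nat t)) => /=.
  move=> /negP E2. right.
  have E3 : (- (up (- b) - 1) < Z.of_nat t)%Z.
    apply Z.nle_gt; intro h; apply: E2; exact/Z.leb_le.
  have E4 : (2 - up (- b) <= Z.of_nat t)%Z by lia.
  apply IZR_le in E4. rewrite minus_IZR in E4. simpl in E4. lra.
move=> _. left.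
have E3 : (Z.of_nat t < up a - 1)%Z.
  apply Z.nle_gt; intro h. move/Z.leb_le: h. by rewrite E1.
have E4 : (Z.of_nat t <= up a - 2)%Z by lia.
apply IZR_le in E4. rewrite minus_IZR in E4. simpl in E4. lra.
Qed.

Lemma ln_ge1 (n : nat) : (3 <= n)%nat -> 1 <= ln (INR n).
Proof.
move=> hn.
have h3 : 3 <= INR n. { have : (3 <= n)%coq_nat by apply/leP. move/le_INR. simpl. lra. }
rewrite -(ln_exp 1).
have := exp_le_3. move=> h.
case: (Rle_lt_or_eq_dec _ _ h) => h'.
  apply: Rlt_le; apply: ln_increasing; [exact: exp_pos | lra].
rewrite h'. case: (Rle_lt_or_eq_dec _ _ h3) => h''.
  apply: Rlt_le; apply: ln_increasing; lra.
rewrite h''; lra.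
Qed.

Lemma exp_5ln (n : nat) : (3 <= n)%nat -> exp (- (INR 5 * ln (INR n))) = / (INR n ^ 5).
Proof.
move=> hn.
have h3 : 0 < INR n. { have : (3 <= n)%coq_nat by apply/leP. move/le_INR. simpl. lra. }
rewrite -ln_pow // exp_Ropp exp_ln //. apply: pow_lt. exact h3.
Qed.

End StdlibPart.

From mathcomp Require Import all_order all_algebra.
From mathcomp Require Import Rstruct lra ring.
Import Order.TTheory GRing.Theory Num.Theory.
Local Open Scope ring_scope.

Definition E (u : R) : R := exp u.
Arguments E u%_ring_scope.

Lemma expLe (u v : R) : u <= v -> E u <= E v.
Proof.
move/RleP=> h; apply/RleP; case: (Rle_lt_or_eq_dec _ _ h) => h'.
  exact: Rlt_le (exp_increasing _ _ h').
by rewrite h'; apply: Rle_refl.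
Qed.

Lemma exp_gt0 (u : R) : 0 < E u.
Proof. apply/RltP; exact: exp_pos. Qed.

Lemma exp1D (u : R) : 1 + u <= E u.
Proof. apply/RleP; exact: exp_ineq1_le. Qed.

Lemma expD (u v : R) : E (u + v) = E u * E v.
Proof. exact: exp_plus. Qed.

Lemma expN_mul (u : R) : E u * E (- u) = 1.
Proof. apply: (eq_trans (esym (exp_plus u (-u)))); rewrite Rplus_opp_r; exact: exp_0. Qed.

Lemma exp_up (y : R) : 0 <= y -> y <= 1/2 -> E y - 1 <= y + 2 * y ^+ 2.
Proof.
move=> h0 h1.
have e1 : 1 - y <= E (- y) := exp1D _. have e2 := expN_mul y. have e3 := exp_gt0 y.
have h3 : 0 <= y ^+ 2 * (1 - 2 * y) by apply: mulr_ge0; [exact: sqr_ge0 | lra].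
have h4 : E y * (1 - y) <= 1.
  rewrite -[X in _ <= X]e2; apply: ler_wpM2l; [exact: ltW | lra].
have h5 : 1 <= (1 + y + 2 * y ^+ 2) * (1 - y).
  have -> : (1 + y + 2 * y ^+ 2) * (1 - y) = 1 + y ^+ 2 * (1 - 2 * y) by rewrite !expr2; ring.
  lra.
have h6 : E y * (1 - y) <= (1 + y + 2 * y ^+ 2) * (1 - y) by lra.
have : E y <= 1 + y + 2 * y ^+ 2 by rewrite -(ler_pM2r (_ : 0 < 1 - y)) //; lra.
lra.
Qed.

Lemma exp_low (y : R) : 0 <= y -> E (- y) - 1 <= - y + y ^+ 2.
Proof.
move=> h0.
have e1 := exp1D y. have e2 := expN_mul y. have e3 : 0 < E (- y) := exp_gt0 _.
have h3 : 0 <= y ^+ 3 by apply: exprn_ge0.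
have h4 : E (- y) * (1 + y) <= 1.
  rewrite -[X in _ <= X]e2 mulrC; apply: ler_wpM2r; [exact: ltW | lra].
have h5 : 1 <= (1 - y + y ^+ 2) * (1 + y).
  have -> : (1 - y + y ^+ 2) * (1 + y) = 1 + y ^+ 3 by rewrite !exprS expr0; ring.
  lra.
have : E (- y) <= 1 - y + y ^+ 2 by rewrite -(ler_pM2r (_ : 0 < 1 + y)) //; lra.
lra.
Qed.


Section MGF.
Variables (T : finType) (n : nat) (v : 'I_n -> nat) (S : pred T).
Definition Xs (a : {ffun 'I_n -> T}) : nat := (\sum_(i < n | S (a i)) v i)%nat.

Lemma exp0R : E 0 = 1. Proof. exact: exp_0. Qed.

Lemma sum_exp_S (e : R) :
  \sum_(t : T) E (e * (if S t then e else 0)) = 0.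
Abort.

Lemma sum_cond (c d : R) :
  \sum_(t : T) (if S t then c else d) = #|S|%:R * c + (#|T| - #|S|)%nat%:R * d.
Proof.
rewrite (bigID S) /=.
rewrite (eq_bigr (fun _ => c)); last by move=> t ->.
rewrite [X in _ + X](eq_bigr (fun _ => d)); last by move=> t; case: (S t).
rewrite !sumr_const -(cardC S) addKn.
by rewrite !mulr_natl.
Qed.

Lemma mgf (lam : R) :
  \sum_(a : {ffun 'I_n -> T}) E (lam * (Xs a)%:R) =
  \prod_(i < n) (#|T|%:R + #|S|%:R * (E (lam * (v i)%:R) - 1)).
Proof.
have step : forall a : {ffun 'I_n -> T}, E (lam * (Xs a)%:R) =
    \prod_(i < n) E (lam * (if S (a i) then v i else 0%nat)%:R).
  move=> a; rewrite /Xs big_mkcond natr_sum mulr_sumr.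
  exact: (big_morph E expD exp0R).
rewrite (eq_bigr _ (fun a _ => step a)).
rewrite -(bigA_distr_bigA (fun i t => E (lam * (if S t then v i else 0%nat)%:R))).
apply: eq_bigr => i _.
rewrite (eq_bigr (fun t => if S t then E (lam * (v i)%:R) else 1)); last first.
  by move=> t _; case: (S t) => //; rewrite mulr0 exp0R.
rewrite sum_cond.
have Hc : (#|S| <= #|T|)%nat by apply: max_card.
rewrite natrB // mulr1.
set e := E _. set s := #|S|%:R. set t := #|T|%:R.
ring.
Qed.

Lemma mgf_le (lam : R) : (0 < #|T|)%nat ->
  \sum_(a : {ffun 'I_n -> T}) E (lam * (Xs a)%:R) <=
  #|T|%:R ^+ n * E (#|S|%:R / #|T|%:R * \sum_(i < n) (E (lam * (v i)%:R) - 1)).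
Proof.
move=> hT; rewrite mgf.
set t := #|T|%:R; set s := #|S|%:R.
have ht : 0 < t by rewrite ltr0n.
have hs : 0 <= s by [].
have hst : s <= t by rewrite ler_nat; apply: max_card.
rewrite mulr_sumr (big_morph E expD exp0R).
have -> : t ^+ n = \prod_(i < n) t by rewrite prodr_const card_ord.
rewrite -big_split /=.
apply: ler_prod => i _.
set e := E _.
have he : 0 < e by apply: exp_gt0.
apply/andP; split.
  have : 0 <= s * e by apply: mulr_ge0 => //; exact: ltW.
  nra.
have h1 := exp1D (s / t * (e - 1)).
have h2 : t + s * (e - 1) = t * (1 + s / t * (e - 1)).
  field. by rewrite gt_eqF.
rewrite h2; apply: ler_wpM2l; [exact: ltW | exact: h1].
Qed.
End MGF.

Lemma markov (A : finType) (B : pred A) (F : A -> R) (y : R) :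
  (forall a, 0 <= F a) -> (forall a, B a -> y <= F a) ->
  #|B|%:R * y <= \sum_(a : A) F a.
Proof.
move=> h0 h1; rewrite (bigID B) /=.
have e1 : \sum_(a | B a) y <= \sum_(a | B a) F a by apply: ler_sum => a; exact: h1.
have e2 : 0 <= \sum_(a | ~~ B a) F a by apply: sumr_ge0 => a _; exact: h0.
have e3 : \sum_(a | B a) y = #|B|%:R * y by rewrite sumr_const mulr_natl.
lra.
Qed.


Lemma lam_b (b c s0 : R) : 0 < b -> 0 < s0 -> s0 * s0 = b * c -> b <= c ->
  1 / (2 * s0) * b <= 1/2.
Proof.
move=> hb hs0 hs0D hbc.
have hbs : b <= s0.
  have : b * b <= s0 * s0 by rewrite hs0D; apply: ler_wpM2l; [exact: ltW|].
  have hbs0 : 0 < b + s0 by lra. nra.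
have hp : 0 <= 1 / (2 * s0) by rewrite divr_ge0 //; lra.
apply: (le_trans (ler_wpM2l hp hbs)).
have -> : 1 / (2 * s0) * s0 = 1/2 by field; lra.
by [].
Qed.

Lemma lam2 (b c s0 : R) : 0 < s0 -> s0 * s0 = b * c ->
  1 / (2 * s0) * (1 / (2 * s0)) * (b * c) = 1/4.
Proof. move=> hs0 hs0D. rewrite -hs0D. field. lra. Qed.

Lemma upper_tail (T : finType) (n : nat) (v : 'I_n -> nat) (S : pred T) (b c r s0 : R) :
  (0 < #|T|)%nat -> 0 < b -> (forall i, (v i)%:R <= b) -> 0 < s0 ->
  s0 * s0 = b * c -> b <= c ->
  #|S|%:R / #|T|%:R * \sum_(i < n) ((v i)%:R : R) <= c ->
  #|[pred a : {ffun 'I_n -> T} | c + r < (Xs v S a)%:R]|%:R <=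
  #|T|%:R ^+ n * E (1/2 - r / (2 * s0)).
Proof.
move=> hT hb hv hs0 hs0D hbc.
move=> hV.
move: hV; set rho := _ / _; set V := \sum_(i < n) _ => hV.
have hlb := lam_b hb hs0 hs0D hbc. have hl2 := lam2 hs0 hs0D.
set lam := 1 / (2 * s0) in hlb hl2 *.
have hl : 0 < lam by rewrite /lam divr_gt0 //; lra.
have hr : 0 <= rho by rewrite /rho divr_ge0.
have hM := @markov _ [pred a : {ffun 'I_n -> T} | c + r < (Xs v S a)%:R]
   (fun a => E (lam * (Xs v S a)%:R)) (E (lam * (c + r))).
have hM' := hM (fun a => ltW (exp_gt0 _)) (fun a ha => expLe (ler_wpM2l (ltW hl) (ltW ha))).
have hG := mgf_le v S lam hT.
have hsum : \sum_(i < n) (E (lam * (v i)%:R) - 1) <= (lam + 2 * lam * lam * b) * V.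
  rewrite /V mulr_sumr; apply: ler_sum => i _.
  have h0 : 0 <= (v i)%:R :> R by [].
  have h1 : lam * (v i)%:R <= 1/2.
    apply: le_trans hlb; apply: ler_wpM2l; [exact: ltW | exact: hv].
  have h2 := exp_up (mulr_ge0 (ltW hl) h0) h1.
  have h3 : (v i)%:R * (v i)%:R <= b * (v i)%:R :> R by apply: ler_wpM2r => //.
  have h4 : 0 <= lam * lam by nra.
  have h5 : lam * lam * ((v i)%:R * (v i)%:R) <= lam * lam * (b * (v i)%:R) by apply: ler_wpM2l.
  rewrite expr2 in h2. nra.
have hexp : rho * \sum_(i < n) (E (lam * (v i)%:R) - 1) <= lam * c + 1/2.
  have e1 : rho * \sum_(i < n) (E (lam * (v i)%:R) - 1) <= rho * ((lam + 2 * lam * lam * b) * V)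
    by apply: ler_wpM2l.
  have e2 : rho * ((lam + 2 * lam * lam * b) * V) = (lam + 2 * lam * lam * b) * (rho * V) by ring.
  have e3 : (lam + 2 * lam * lam * b) * (rho * V) <= (lam + 2 * lam * lam * b) * c.
    apply: ler_wpM2l => //; nra.
  nra.
have hE := expLe hexp.
set N := #|_|%:R in hM' *.
set Q := #|T|%:R ^+ n.
have hQ : 0 <= Q by apply: exprn_ge0.
have key : N * E (lam * (c + r)) <= Q * E (lam * c + 1 / 2).
  apply: le_trans hM' _; apply: le_trans hG _; apply: ler_wpM2l => //.
have eq : E (lam * c + 1/2) = E (1/2 - r / (2 * s0)) * E (lam * (c + r)).
  rewrite -expD; congr E; rewrite /lam; field; lra.
rewrite eq mulrA in key.
have hp : 0 < E (lam * (c + r)) by apply: exp_gt0.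
by rewrite -(ler_pM2r hp).
Qed.

Lemma lower_tail (T : finType) (n : nat) (v : 'I_n -> nat) (S : pred T) (b c r s0 : R) :
  (0 < #|T|)%nat -> 0 < b -> (forall i, (v i)%:R <= b) -> 0 < s0 ->
  s0 * s0 = b * c -> b <= c ->
  #|S|%:R / #|T|%:R * \sum_(i < n) ((v i)%:R : R) <= c ->
  c - b <= #|S|%:R / #|T|%:R * \sum_(i < n) ((v i)%:R : R) ->
  #|[pred a : {ffun 'I_n -> T} | (Xs v S a)%:R < c - r]|%:R <=
  #|T|%:R ^+ n * E (3/4 - r / (2 * s0)).
Proof.
move=> hT hb hv hs0 hs0D hbc hV hV'.
move: hV hV'; set rho := _ / _; set V := \sum_(i < n) _ => hV hV'.
have hlb := lam_b hb hs0 hs0D hbc. have hl2 := lam2 hs0 hs0D.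
set lam := 1 / (2 * s0) in hlb hl2 *.
have hl : 0 < lam by rewrite /lam divr_gt0 //; lra.
have hr : 0 <= rho by rewrite /rho divr_ge0.
have hM := @markov _ [pred a : {ffun 'I_n -> T} | (Xs v S a)%:R < c - r]
   (fun a => E (- lam * (Xs v S a)%:R)) (E (- lam * (c - r))).
have hM' : #|[pred a : {ffun 'I_n -> T} | (Xs v S a)%:R < c - r]|%:R * E (- lam * (c - r)) <=
    \sum_a E (- lam * (Xs v S a)%:R).
  apply: hM; first by move=> a; exact: ltW (exp_gt0 _).
  move=> a ha; apply: expLe.
  have := ler_wpM2l (ltW hl) (ltW ha); lra.
have hG := mgf_le v S (- lam) hT.
have hsum : \sum_(i < n) (E (- lam * (v i)%:R) - 1) <= (- lam + lam * lam * b) * V.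
  rewrite /V mulr_sumr; apply: ler_sum => i _.
  have h0 : 0 <= (v i)%:R :> R by [].
  have h2 := exp_low (mulr_ge0 (ltW hl) h0).
  rewrite -mulNr in h2.
  have h3 : (v i)%:R * (v i)%:R <= b * (v i)%:R :> R by apply: ler_wpM2r => //.
  have h4 : 0 <= lam * lam by nra.
  have h5 : lam * lam * ((v i)%:R * (v i)%:R) <= lam * lam * (b * (v i)%:R) by apply: ler_wpM2l.
  rewrite expr2 in h2. nra.
have hexp : rho * \sum_(i < n) (E (- lam * (v i)%:R) - 1) <= - lam * c + 3/4.
  have e1 : rho * \sum_(i < n) (E (- lam * (v i)%:R) - 1) <= rho * ((- lam + lam * lam * b) * V)
    by apply: ler_wpM2l.
  have e2 : rho * ((- lam + lam * lam * b) * V) = - lam * (rho * V) + lam * lam * b * (rho * V) by ring.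
  have e3 : lam * (c - b) <= lam * (rho * V) by apply: ler_wpM2l => //; exact: ltW.
  have e4 : lam * lam * b * (rho * V) <= lam * lam * b * c.
    apply: ler_wpM2l => //; nra.
  nra.
have hE := expLe hexp.
set N := #|_|%:R in hM' *.
set Q := #|T|%:R ^+ n.
have hQ : 0 <= Q by apply: exprn_ge0.
have key : N * E (- lam * (c - r)) <= Q * E (- lam * c + 3/4).
  apply: le_trans hM' _; apply: le_trans hG _; apply: ler_wpM2l => //.
have eq : E (- lam * c + 3/4) = E (3/4 - r / (2 * s0)) * E (- lam * (c - r)).
  rewrite -expD; congr E; rewrite /lam; field; lra.
rewrite eq mulrA in key.
have hp : 0 < E (- lam * (c - r)) by apply: exp_gt0.
by rewrite -(ler_pM2r hp).
Qed.


Lemma etaE n : eta n = 11 * ln (INR n).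
Proof. rewrite /eta; congr (_ * _). by rewrite IZRposE INRE. Qed.

Lemma eta_bounds (n : nat) : (3 <= n)%nat ->
  E (1/2 - eta n / 2) + E (3/4 - eta n / 2) <= 4 / n%:R ^+ 5.
Proof.
move=> hn.
have hL : 1 <= ln (INR n) by apply/RleP; exact: ln_ge1.
have h5 : E (- (5 * ln (INR n))) = 1 / n%:R ^+ 5.
  have := @exp_5ln n hn; rewrite !RealsE => h. by rewrite /E h div1r.
have hn0 : 0 < n%:R :> R by rewrite ltr0n; apply: leq_trans hn.
have hp : 0 < 1 / n%:R ^+ 5 :> R by rewrite divr_gt0 // exprn_gt0.
have e1 : E (1/2 - eta n / 2) <= E (- (5 * ln (INR n))).
  apply: expLe; rewrite etaE; lra.
have e2 : E (3/4 - eta n / 2) <= E (1/4) * E (- (5 * ln (INR n))).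
  rewrite -expD; apply: expLe; rewrite etaE; lra.
have e3 : E (1/4) <= 3.
  apply: (le_trans (expLe (_ : 1/4 <= 1))); first lra.
  apply/RleP; exact: exp_le_3.
rewrite h5 in e1 e2.
have e4 : E (1/4) * (1 / n%:R ^+ 5) <= 3 * (1 / n%:R ^+ 5) by apply: ler_wpM2r => //; exact: ltW.
have -> : 4 / n%:R ^+ 5 = 1 / n%:R ^+ 5 + 3 * (1 / n%:R ^+ 5) :> R by ring.
lra.
Qed.

Definition Sg (k l j : nat) : pred 'I_(2 ^ k) := [pred t : 'I_(2 ^ k) | (t %/ expn 2 l)%nat == j].
Arguments Sg : clear implicits.
Definition vv (n : nat) (w : 'I_n -> nat) (x : {ffun 'I_n -> bool}) : 'I_n -> nat := fun i => (w i * x i)%nat.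
Definition cc (W k l : nat) : R := (INR W / INR (2 ^ k) * INR (2 ^ l))%R.
Definition rr (n : nat) (w : 'I_n -> nat) (W k l : nat) : R := (sqrt (Defs.Delta w W k * INR (2 ^ l)) * eta n)%R.

Lemma group_bound (n : nat) (w : 'I_n -> nat) (W k : nat) (x : {ffun 'I_n -> bool}) (l j : nat) :
  (3 <= n)%nat -> (0 < wmax w)%nat -> (expn 2 k * wmax w <= W)%nat ->
  (W <= wJ w predT x + wmax w)%nat -> (wJ w predT x <= W)%nat ->
  (l <= k)%nat -> (j < expn 2 (k - l))%nat ->
  ((addn #|[pred a : {ffun 'I_n -> 'I_(2 ^ k)} | (Xs (vv w x) (Sg k l j) a)%:R < cc W k l - rr w W k l]|
   #|[pred a : {ffun 'I_n -> 'I_(2 ^ k)} | cc W k l + rr w W k l < (Xs (vv w x) (Sg k l j) a)%:R]|)%:R : R)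
  <= (expn 2 k)%:R ^+ n * (4 / n%:R ^+ 5).
Proof.
move=> hn hb hqW hW1 hW2 hl hj.
set S := Sg k l j. set v := vv w x. set cS := cc W k l. set rS := rr w W k l.
have hT : (0 < #|'I_(2 ^ k)|)%nat by rewrite card_ord powE expn_gt0.
have hcT : #|'I_(2 ^ k)| = expn 2 k by rewrite card_ord powE.
set b : R := (wmax w)%:R.
have hb' : 0 < b by rewrite ltr0n.
have hv : forall i, (v i)%:R <= b.
  move=> i; rewrite ler_nat /v /vv /b.
  apply: (leq_trans _ (leq_bigmax (F := w) i)).
  by case: (x i); rewrite ?muln1 ?muln0.
set q : R := (expn 2 k)%:R. set P : R := (expn 2 l)%:R.
have hq : 0 < q by rewrite ltr0n expn_gt0.
have hP1 : 1 <= P by rewrite ler1n expn_gt0.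
have hPq : P <= q by rewrite ler_nat leq_pexp2l.
have hcS : cS = W%:R / q * P by rewrite /cS /cc !RealsE !powE.
have hqb : q * b <= W%:R by rewrite -natrM ler_nat.
have hbc : b <= cS.
  rewrite hcS.
  have h1 : b <= W%:R / q by rewrite ler_pdivlMr // mulrC.
  have h2 : 0 <= W%:R / q by rewrite divr_ge0 // ltW.
  nra.
set D := (Defs.Delta w W k * INR (2 ^ l))%R.
have hD : D = b * cS.
  rewrite /D /Defs.Delta hcS !RealsE !powE -/b -/q -/P; field; exact: lt0r_neq0.
have hD0 : 0 < D by rewrite hD; apply: mulr_gt0 => //; lra.
set s0 := sqrt D.
have hs0 : 0 < s0 by apply/RltP; apply: sqrt_lt_R0; exact/RltP.
have hs0D : s0 * s0 = b * cS by rewrite -hD; apply: sqrt_sqrt; apply/RleP; exact: ltW.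
have hS : #|S| = expn 2 l.
  rewrite /S /Sg; apply: card_slice; first by rewrite expn_gt0.
  by rewrite powE -mulSnr -[X in (_ <= expn 2 X)%nat](subnK hl) expnD leq_mul2r hj orbT.
set V := \sum_(i < n) ((v i)%:R : R).
have hV : V = (wJ w predT x)%:R by rewrite /V /wJ natr_sum /v /vv.
have hrho : #|S|%:R / #|'I_(2 ^ k)|%:R = P / q by rewrite hS hcT.
have hVW : V <= W%:R by rewrite hV ler_nat.
have hVW' : W%:R - b <= V.
  rewrite hV lerBlDr -natrD ler_nat; exact: hW1.
have hup : #|S|%:R / #|'I_(2 ^ k)|%:R * V <= cS.
  rewrite hrho hcS.
  have -> : W%:R / q * P = P / q * W%:R by field; exact: lt0r_neq0.
  apply: ler_wpM2l => //; rewrite divr_ge0 // ltW //; lra.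
have hlo : cS - b <= #|S|%:R / #|'I_(2 ^ k)|%:R * V.
  rewrite hrho hcS.
  have hPq' : P / q <= 1 by rewrite ler_pdivrMr // mul1r.
  have hPq0 : 0 <= P / q by rewrite divr_ge0 // ltW //; lra.
  have -> : W%:R / q * P = P / q * W%:R by field; exact: lt0r_neq0.
  have e1 : P / q * (W%:R - b) <= P / q * V by apply: ler_wpM2l.
  have e2 : P / q * b <= b by rewrite -[X in _ <= X]mul1r; apply: ler_wpM2r => //; exact: ltW.
  nra.
have hU := @upper_tail _ _ _ _ _ _ rS _ hT hb' hv hs0 hs0D hbc hup.
have hL := @lower_tail _ _ _ _ _ _ rS _ hT hb' hv hs0 hs0D hbc hup hlo.
have hr : rS / (2 * s0) = eta n / 2 by rewrite /rS /rr -/D -/s0; field; exact: lt0r_neq0.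
rewrite hr hcT -/q in hU hL.
have hB := eta_bounds hn.
have hQ : 0 <= q ^+ n by apply: exprn_ge0; exact: ltW.
rewrite natrD.
have e1 : q ^+ n * E (3 / 4 - eta n / 2) + q ^+ n * E (1 / 2 - eta n / 2) <= q ^+ n * (4 / n%:R ^+ 5).
  by rewrite -mulrDr; apply: ler_wpM2l => //; rewrite addrC.
lra.
Qed.

Definition Lset (n : nat) (w : 'I_n -> nat) (W k : nat) (x : {ffun 'I_n -> bool}) (l j : nat) :=
  [pred a : {ffun 'I_n -> 'I_(2 ^ k)} | (Xs (vv w x) (Sg k l j) a)%:R < cc W k l - rr w W k l].
Definition Uset (n : nat) (w : 'I_n -> nat) (W k : nat) (x : {ffun 'I_n -> bool}) (l j : nat) :=
  [pred a : {ffun 'I_n -> 'I_(2 ^ k)} | cc W k l + rr w W k l < (Xs (vv w x) (Sg k l j) a)%:R].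
Arguments Lset {n} w W k x l j.
Arguments Uset {n} w W k x l j.

Lemma bad_point (n : nat) (w p : 'I_n -> nat) (W k : nat) (x : {ffun 'I_n -> bool})
  (a : {ffun 'I_n -> 'I_(2 ^ k)}) :
  ~~ goodPartition w p W x a ->
  exists l : 'I_k.+1, exists j : 'I_(2 ^ (k - l)),
    (a \in Lset w W k x l j) || (a \in Uset w W k x l j).
Proof.
move=> hbad.
have : ~~ [forall l : 'I_k.+1, [forall j : 'I_(2 ^ (k - l)),
   inJ w W k l (wJ w (inGroup a l j.+1) x)]].
  apply: contra hbad => /forallP hall.
  have allJ : forall l j, (l <= k)%nat -> (j < 2 ^ (k - l))%nat ->
     inJ w W k l (wJ w (inGroup a l j.+1) x).
    move=> l j hl hj.
    have := hall (Ordinal (hl : (l < k.+1)%nat)) => /forallP /(_ (Ordinal hj)).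
    by [].
  apply/forallP => l; apply/forallP => j /=.
  rewrite allJ //=; last by rewrite -ltnS.
  apply: allC; [exact: allJ | by rewrite -ltnS | exact: ltn_ord].
rewrite negb_forall => /existsP [l]; rewrite negb_forall => /existsP [j] hJ.
exists l, j.
have hX : wJ w (inGroup a l j.+1) x = Xs (vv w x) (Sg k l j) a.
  by rewrite /wJ /Xs; apply: eq_bigl => i; rewrite inGroupE.
rewrite hX in hJ.
have := @notinIntv _ _ _ hJ.
rewrite /Lset /Uset !inE -/(cc W k l) -/(rr w W k l) INRE.
by case=> [/RltP -> | /RltP ->]; rewrite ?orbT.
Qed.

Lemma le_sum_term (I : finType) (F : I -> nat) (i : I) : (F i <= \sum_(i0 : I) F i0)%nat.
Proof. by rewrite (bigD1 i) //= leq_addr. Qed.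

Lemma sum_in (I : finType) (A : pred I) : \sum_(a : I) nat_of_bool (a \in A) = #|A|.
Proof. by rewrite -sum1_card [RHS]big_mkcond; apply: eq_bigr => a _; case: (a \in A). Qed.

Lemma bad_count (n : nat) (w p : 'I_n -> nat) (W k : nat) (x : {ffun 'I_n -> bool}) :
  (#|[set a : {ffun 'I_n -> 'I_(2 ^ k)} | ~~ goodPartition w p W x a]| <=
   \sum_(l < k.+1) \sum_(j < 2 ^ (k - l)) (#|Lset w W k x l j| + #|Uset w W k x l j|))%nat.
Proof.
pose F := fun a : {ffun 'I_n -> 'I_(2 ^ k)} =>
  (\sum_(l < k.+1) \sum_(j < 2 ^ (k - l)) (nat_of_bool (a \in Lset w W k x l j) + nat_of_bool (a \in Uset w W k x l j)))%nat.
have h1 : (#|[set a : {ffun 'I_n -> 'I_(2 ^ k)} | ~~ goodPartition w p W x a]| <= \sum_a F a)%nat.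
  rewrite -sum1_card big_mkcond /=; apply: leq_sum => a _; rewrite inE.
  case hb: (goodPartition w p W x a) => //=.
  have [l [j hlj]] := bad_point (negbT hb).
  apply: leq_trans (le_sum_term _ l); apply: leq_trans (le_sum_term _ j).
  by case/orP: hlj => ->; rewrite ?addn1 ?add1n.
apply: leq_trans h1 _; rewrite /F exchange_big /=; apply: leq_sum => l _.
rewrite exchange_big /=; apply: leq_sum => j _.
by rewrite big_split /= !sum_in.
Qed.

Lemma main_ring (n : nat) (w p : 'I_n -> nat) (W k : nat) (x : {ffun 'I_n -> bool}) :
  (3 <= n)%nat -> (0 < wmax w)%nat -> (W <= n * wmax w)%nat ->
  (expn 2 k * wmax w <= W)%nat ->
  (W <= wJ w predT x + wmax w)%nat -> (wJ w predT x <= W)%nat ->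
  1 - 1 / (n%:R : R) ^+ 2 <=
  #|[set a : {ffun 'I_n -> 'I_(2 ^ k)} | goodPartition w p W x a]|%:R / (expn (expn 2 k) n)%:R.
Proof.
move=> hn hb hWn hqW hW1 hW2.
set G := [set a | goodPartition w p W x a].
set Bs := [set a : {ffun 'I_n -> 'I_(2 ^ k)} | ~~ goodPartition w p W x a].
have hGB : (#|G| + #|Bs| = expn (expn 2 k) n)%nat.
  have -> : Bs = ~: G by apply/setP => a; rewrite !inE.
  by rewrite cardsC card_ffun !card_ord powE.
set q : R := (expn 2 k)%:R.
have hq : 0 < q by rewrite ltr0n expn_gt0.
have hn0 : 0 < n%:R :> R by rewrite ltr0n; apply: leq_trans hn.
have hqn : (expn 2 k <= n)%nat by rewrite -(leq_pmul2r hb); apply: leq_trans hqW hWn.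
have hBc := @bad_count n w p W k x.
rewrite -/Bs in hBc.
have hBR : #|Bs|%:R <= (2 * n)%nat%:R * (q ^+ n * (4 / n%:R ^+ 5)).
  apply: (le_trans (y := (\sum_(l < k.+1) \sum_(j < 2 ^ (k - l))
        (#|Lset w W k x l j| + #|Uset w W k x l j|)%nat)%nat%:R)); first by rewrite ler_nat.
  rewrite !natr_sum.
  apply: (le_trans (y := \sum_(l < k.+1) \sum_(j < 2 ^ (k - l)) (q ^+ n * (4 / n%:R ^+ 5)))).
    under eq_bigr do rewrite natr_sum.
    apply: ler_sum => l _; apply: ler_sum => j _.
    have hl : (l <= k)%nat by rewrite -ltnS.
    have hj : (j < expn 2 (k - l))%nat by rewrite -powE.
    exact: (@group_bound n w W k x l j hn hb hqW hW1 hW2 hl hj).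
  set c := q ^+ n * (4 / n%:R ^+ 5).
  have hc : 0 <= c by rewrite /c mulr_ge0 // ?exprn_ge0 ?divr_ge0 ?exprn_ge0 // ltW.
  rewrite (eq_bigr (fun l : 'I_k.+1 => c *+ expn 2 (k - l))); last first.
    by move=> l _; rewrite sumr_const card_ord powE.
  rewrite sumrMnr -[c *+ _]mulr_natl; apply: ler_wpM2r => //; rewrite ler_nat.
  apply: leq_trans (ltnW (sum_pow2 k)) _.
  by rewrite expnS leq_mul2l hqn orbT.
have hQ : (expn (expn 2 k) n)%:R = q ^+ n :> R by rewrite natrX.
have hG : #|G|%:R = q ^+ n - #|Bs|%:R :> R.
  by rewrite -hQ -hGB natrD addrK.
rewrite hQ hG.
set Qn := q ^+ n. set B := #|Bs|%:R. set N := n%:R in hn0 hBR *.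
have hQn : 0 < Qn by apply: exprn_gt0.
have hN3 : 3 <= N by rewrite /N ler_nat.
set t := 1 / N ^+ 2.
have ht : 0 < t by rewrite /t divr_gt0 // exprn_gt0.
have ht9 : t <= 1/9.
  have h9 : 9 <= N ^+ 2 by rewrite expr2; nra.
  have htN : t * N ^+ 2 = 1 by rewrite /t; field; apply: lt0r_neq0.
  have : 0 <= t * (N ^+ 2 - 9) by apply: mulr_ge0; [exact: ltW | lra].
  nra.
have e1' : 2 * N * (Qn * (4 / N ^+ 5)) = Qn * (8 * t * t) :> R.
  rewrite /t. field. by apply: lt0r_neq0.
have e1 : (2 * n)%nat%:R * (Qn * (4 / N ^+ 5)) = Qn * (8 * t * t).
  by rewrite natrM -/N.
have e3 : 8 * t * t <= t by nra.
have hB : B <= Qn * t.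
  apply: (le_trans hBR); rewrite e1; apply: ler_wpM2l => //; exact: ltW.
have -> : (Qn - B) / Qn = 1 - B / Qn by field; exact: lt0r_neq0.
have : B / Qn <= t by rewrite ler_pdivrMr // mulrC.
lra.
Qed.


Close Scope ring_scope.
From Stdlib Require Import Reals.
Delimit Scope R_scope with R.

(* Probability over the uniform random partition = (#good assignments) / q^n. *)
Theorem mainTheorem7 (n : nat) (w p : 'I_n -> nat) (W k : nat) (x : {ffun 'I_n -> bool}) :
  3 <= n ->
  0 < wmax w ->
  wmax w <= W -> W <= n * wmax w ->
  2 ^ k * wmax w <= W ->
  W <= wJ w predT x + wmax w -> wJ w predT x <= W ->
  (1 - 1 / (INR n ^ 2) <=
   INR #|[set a : {ffun 'I_n -> 'I_(2 ^ k)} | goodPartition w p W x a]| / INR ((2 ^ k) ^ n))%R.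
Proof.
move=> hn hb hW hWn hqW hW1 hW2.
have hqW' : (expn 2 k * wmax w <= W)%nat by rewrite -powE.
have h := @main_ring n w p W k x hn hb hWn hqW' hW1 hW2.
apply/RleP. rewrite !RealsE [Nat.pow (Nat.pow 2 k) n]powE [in expn (Nat.pow 2 k) n]powE. exact: h.
Qed.
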